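(* Let $s,t$ be integers with $s\ge t\ge 2$, and let $c\ge s$ be a real number such that for every real $w>1$ and every graph $G$ with $\alpha(G)<s$ and $\omega(G)\le w$ we have $|G|< cw^{s-1}/(\log w)^{s-2}$. If $G$ is a $K_{s,t}$-free graph and $w>1$ is a real number with $w\ge \omega(G)$, then $$|G|\le \frac{c\,\alpha(G)^t w^{s-1}}{(\log w)^{s-2}}.$$
   Context: All graphs are finite and simple; $|G|$ is the number of vertices, $\alpha(G)$ the maximum size of a stable set and $\omega(G)$ the maximum size of a clique in $G$. A graph is $K_{s,t}$-free if it has no induced subgraph isomorphic to the complete bipartite graph $K_{s,t}$. Logarithms are to base two. *)

(* Defs.v *)
From HB Require Import structures.
From mathcomp Require Import all_boot all_order all_algebra.
From mathcomp Require Import reals exp.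
Set Implicit Arguments. Unset Strict Implicit. Unset Printing Implicit Defensive.
Import Order.TTheory GRing.Theory Num.Theory.

Definition simple_graph (T : finType) (e : rel T) : Prop :=
  symmetric e /\ irreflexive e.

Definition stable_set (T : finType) (e : rel T) (A : {set T}) : bool :=
  [forall x in A, forall y in A, ~~ e x y].

Definition clique (T : finType) (e : rel T) (A : {set T}) : bool :=
  [forall x in A, forall y in A, (x != y) ==> e x y].

Definition alpha (T : finType) (e : rel T) : nat :=
  \max_(A : {set T} | stable_set e A) #|A|.

Definition omega (T : finType) (e : rel T) : nat :=
  \max_(A : {set T} | clique e A) #|A|.

Definition has_induced_Kst (T : finType) (e : rel T) (s t : nat) : Prop :=
  exists A B : {set T},
    [/\ #|A| = s, #|B| = t, [disjoint A & B],
        stable_set e A /\ stable_set e B &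
        forall x y, x \in A -> y \in B -> e x y].

Definition Kst_free (T : finType) (e : rel T) (s t : nat) : Prop :=
  ~ has_induced_Kst e s t.

Local Open Scope ring_scope.
Definition log2 (R : realType) (x : R) : R := ln x / ln 2.

(* Main.v *)
Require Import Defs.
From HB Require Import structures.
From mathcomp Require Import all_boot all_order all_algebra.
From mathcomp Require Import reals exp.
From mathcomp Require Import zify.
Import Order.TTheory GRing.Theory Num.Theory.

Lemma ffact_le n m : n ^_ m <= n ^ m.
Proof.
elim: m => [|m IH]; first by rewrite ffactn0.
rewrite ffactnSr expnS mulnC; apply: leq_mul => //; exact: leq_subr.
Qed.
Lemma binle a t : 0 < t -> 'C(a, t.+1) <= a ^ t * (a - 1).
Proof.
move=> t0.
have h := bin_ffact a t.+1.
have f0 := fact_gt0 t.+1.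
have h1 : 'C(a, t.+1) <= a ^_ t.+1 by rewrite -h; apply: leq_pmulr.
apply: (leq_trans h1).
case: a {h h1} => [|n]; first by [].
rewrite ffactSS.
case: t t0 {f0} => [//|t'] _.
have h2 := ffact_le n t'.+1.
have h3 : n ^ t' <= n.+1 ^ t' by elim: (t') {h2} => // k IHk; rewrite !expnS leq_mul.
rewrite !expnS in h2 *.
rewrite subn1 /=. nia.
Qed.
Lemma binsum (a t : nat) : 0 < t -> \sum_(j < t.+1 | 0 < j) 'C(a, j) <= a ^ t.
Proof.
rewrite big_mkcond /=.
elim: t => [//| t IH] _.
rewrite big_ord_recr /=.
case: t IH => [|t] IH.
  by rewrite big_ord_recr big_ord0 /= bin1.
move: (IH isT) (@binle a t.+1 isT) => {IH}.
rewrite (expnS a t.+1).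
case: a => [|n]. rewrite exp0n //; lia.
rewrite subn1 /=. move: (n.+1 ^ t.+1) => x. nia.
Qed.


Lemma stableP (T : finType) (e : rel T) (A : {set T}) :
  reflect (forall x y, x \in A -> y \in A -> ~~ e x y) (stable_set e A).
Proof.
apply: (iffP forall_inP) => H.
- move=> x y xA yA; exact: (forall_inP (H x xA) y yA).
- move=> x xA; apply/forall_inP => y yA; exact: H.
Qed.

Lemma cliqueP (T : finType) (e : rel T) (A : {set T}) :
  reflect (forall x y, x \in A -> y \in A -> x != y -> e x y) (clique e A).
Proof.
apply: (iffP forall_inP) => H.
- move=> x y xA yA; exact/implyP/(forall_inP (H x xA) y yA).
- move=> x xA; apply/forall_inP => y yA; apply/implyP; exact: H.
Qed.

Definition tk {T : finType} (n : nat) (A : {set T}) : {set T} :=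
  [set x in take n (enum A)].

Lemma tk_sub {T : finType} n (A : {set T}) : tk n A \subset A.
Proof. by apply/subsetP => x; rewrite inE => /mem_take; rewrite mem_enum. Qed.

Lemma tk_card {T : finType} n (A : {set T}) : #|tk n A| = minn n #|A|.
Proof.
rewrite cardsE (card_uniqP _) ?take_uniq ?enum_uniq // size_take -cardE.
case: ltnP => h; lia.
Qed.

Lemma tk_all {T : finType} n (A : {set T}) : #|A| <= n -> tk n A = A.
Proof.
move=> h; apply/eqP; rewrite eqEcard tk_sub tk_card /=; lia.
Qed.

Lemma alpha_ge (T : finType) (e : rel T) (A : {set T}) :
  stable_set e A -> #|A| <= alpha e.
Proof. move=> h; exact: (@leq_bigmax_cond _ (stable_set e) (fun A => #|A|) A h). Qed.

Lemma alpha_ex (T : finType) (e : rel T) :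
  exists2 I, stable_set e I & #|I| = alpha e.
Proof.
have h : 0 < #|stable_set e|.
  apply/card_gt0P; exists set0; rewrite unfold_in; apply/stableP => x y; by rewrite inE.
case: (eq_bigmax_cond (fun A : {set T} => #|A|) h) => I hI hmax.
by exists I.
Qed.

Lemma sub_alpha (T : finType) (e : rel T) (X : {set T}) (s : nat) :
  (forall S : {set T}, S \subset X -> stable_set e S -> #|S| < s) ->
  alpha (fun u v : {x | x \in X} => e (val u) (val v)) < s.
Proof.
move=> H; case: s H => [|s] H.
  have st0 : stable_set e set0 by apply/stableP => x y; rewrite inE.
  by have := H set0 (sub0set _) st0.
apply/bigmax_leqP => A hA.
have := H (val @: A) _ _.
rewrite (card_imset _ val_inj) ltnS; apply.
- by apply/subsetP => _ /imsetP [u _ ->]; exact: valP.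
- apply/stableP => _ _ /imsetP[u uA ->] /imsetP[v vA ->].
  exact: (stableP _ _ _ hA u v uA vA).
Qed.

Lemma sub_omega (T : finType) (e : rel T) (X : {set T}) :
  omega (fun u v : {x | x \in X} => e (val u) (val v)) <= omega e.
Proof.
apply/bigmax_leqP => A hA.
rewrite -(card_imset _ val_inj).
apply: (@leq_bigmax_cond _ (clique e) (fun A => #|A|)).
apply/cliqueP => _ _ /imsetP[u uA ->] /imsetP[v vA ->] neq.
apply: (cliqueP _ _ _ hA u v uA vA).
by apply: contraNneq neq => ->.
Qed.

Local Open Scope ring_scope.

Lemma sub_bound (R : realType) (s : nat) (c : R)
  (hc : forall (w : R), 1 < w ->
        forall (T : finType) (e : rel T), simple_graph e ->
        (alpha e < s)%N -> (omega e)%:R <= w ->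
        #|T|%:R < c * w ^+ (s - 1) / (log2 w) ^+ (s - 2))
  (T : finType) (e : rel T) (hG : simple_graph e)
  (w : R) (hw : 1 < w) (hom : (omega e)%:R <= w) (X : {set T}) :
  (forall S : {set T}, S \subset X -> stable_set e S -> (#|S| < s)%N) ->
  #|X|%:R < c * w ^+ (s - 1) / (log2 w) ^+ (s - 2).
Proof.
move=> H.
have sg : simple_graph (fun u v : {x | x \in X} => e (val u) (val v)).
  by split; [move=> u v; exact: hG.1 | move=> u; exact: hG.2].
have := hc w hw _ _ sg (@sub_alpha _ _ _ _ H) (le_trans _ hom).
rewrite card_sig; rewrite ler_nat; move/(_ (@sub_omega T e X)).
have -> : #|[pred x in X]| = #|X| by apply: eq_card.
by [].
Qed.

Theorem mainTheorem5 (R : realType) (s t : nat) (c : R)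
  (hts : (2 <= t)%N) (hst : (t <= s)%N) (hcs : s%:R <= c)
  (hc : forall (w : R), 1 < w ->
        forall (T : finType) (e : rel T), simple_graph e ->
        (alpha e < s)%N -> (omega e)%:R <= w ->
        #|T|%:R < c * w ^+ (s - 1) / (log2 w) ^+ (s - 2))
  (T : finType) (e : rel T) (hG : simple_graph e) (hfree : Kst_free e s t)
  (w : R) (hw : 1 < w) (hom : (omega e)%:R <= w) :
  #|T|%:R <= c * (alpha e)%:R ^+ t * w ^+ (s - 1) / (log2 w) ^+ (s - 2).
Proof.
set M := c * w ^+ (s - 1) / log2 w ^+ (s - 2).
have bnd := @sub_bound R s c hc T e hG w hw hom.
have [I stI cI] := @alpha_ex T e.
have [symm irr] := hG.
have maxI : forall x, x \notin I -> exists2 y, y \in I & e x y.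
  move=> x xI.
  have [/exists_inP[y yI h]|none] := boolP [exists y in I, e x y]; first by exists y.
  exfalso.
  have st : stable_set e (x |: I).
    apply/stableP => u v; rewrite !inE => /predU1P [->|uI] /predU1P [->|vI].
    - by rewrite irr.
    - by apply: contra none => h; apply/exists_inP; exists v.
    - by rewrite symm; apply: contra none => h; apply/exists_inP; exists u.
    - exact: (stableP _ _ _ stI).
  have := @alpha_ge _ _ _ st; rewrite cardsU1 xI cI /=; lia.
pose J := fun x => [set y in I | (y == x) || e x y].
pose K := fun x => tk t (J x).
pose Kset := [set Q : {set T} | (Q \subset I) && (0 < #|Q| <= t)%N].
have JI : forall x, J x \subset I by move=> x; apply/subsetP => y; rewrite inE => /andP[].
have Jn0 : forall x, (0 < #|J x|)%N.
  move=> x; case: (boolP (x \in I)) => xI.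
    by apply/card_gt0P; exists x; rewrite inE xI eqxx.
  have [y yI exy] := maxI x xI.
  by apply/card_gt0P; exists y; rewrite inE yI exy orbT.
have KK : forall x, K x \in Kset.
  move=> x; rewrite inE (subset_trans (tk_sub _ _) (JI x)) tk_card /=.
  have := Jn0 x; lia.
have fib : forall Q, Q \in Kset -> forall S : {set T},
    S \subset [set x | K x == Q] -> stable_set e S -> (#|S| < s)%N.
  move=> Q; rewrite inE => /andP[QI /andP[Q0 Qt]] S SF stS.
  rewrite ltnNge; apply/negP => sS.
  have SK : forall x, x \in S -> K x = Q.
    by move=> x /(subsetP SF); rewrite inE => /eqP.
  have [Qlt|Qge] := ltnP #|Q| t.
  - have SJ : forall x, x \in S -> J x = Q.
      move=> x xS; have hK := SK x xS.
      have := tk_card t (J x); rewrite -/(K x) hK => hc'.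
      rewrite -hK /K tk_all //; lia.
    pose U := (I :\: Q) :|: S.
    have stU : stable_set e U.
      apply/stableP => u v; rewrite !inE => /orP[/andP[uQ uI]|uS] /orP[/andP[vQ vI]|vS].
      + exact: (stableP _ _ _ stI).
      + rewrite symm; have : u \notin J v by rewrite SJ.
        by rewrite inE uI /= negb_or => /andP[_].
      + have : v \notin J u by rewrite SJ.
        by rewrite inE vI /= negb_or => /andP[_].
      + exact: (stableP _ _ _ stS).
    have disj : (I :\: Q) :&: S = set0.
      apply/setP => x; rewrite !inE; apply/negP => /andP[/andP[xQ xI] xS].
      by move: xQ; rewrite -(SJ x xS) inE xI eqxx.
    have cU : #|U| = (#|I| - #|Q| + #|S|)%N.
      by rewrite cardsU disj cards0 subn0 cardsD (setIidPr QI).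
    have := @alpha_ge _ _ _ stU; rewrite cU cI.
    have := subset_leq_card QI; rewrite cI; lia.
  - have Qt' : #|Q| = t by apply/eqP; rewrite eqn_leq Qt Qge.
    have notI : forall x, x \in S -> x \notin I.
      move=> x xS; apply/negP => xI.
      have h1 : (#|J x| <= 1)%N.
        rewrite -(cards1 x); apply: subset_leq_card; apply/subsetP => y.
        rewrite !inE => /andP[yI /orP[//|exy]].
        by have := stableP _ _ _ stI x y xI yI; rewrite exy.
      have := tk_card t (J x); rewrite -/(K x) (SK x xS); lia.
    apply: hfree; exists (tk s S), Q; split.
    + rewrite tk_card; lia.
    + exact: Qt'.
    + rewrite disjoints_subset; apply/subsetP => x /(subsetP (tk_sub _ _)) xS.
      rewrite inE; apply: contra (notI x xS); exact: (subsetP QI).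
    + split.
        apply/stableP => x y /(subsetP (tk_sub _ _)) xS /(subsetP (tk_sub _ _)) yS.
        exact: (stableP _ _ _ stS).
      apply/stableP => x y /(subsetP QI) xI /(subsetP QI) yI.
      exact: (stableP _ _ _ stI).
    + move=> x y /(subsetP (tk_sub _ _)) xS yQ.
      have := tk_sub t (J x); rewrite -/(K x) (SK x xS) => /subsetP /(_ y yQ).
      rewrite inE => /andP[yI /orP[/eqP yx|//]].
      by move: (notI x xS); rewrite -yx yI.
have cardT : #|T| = (\sum_(Q in Kset) #|[set x | K x == Q]|)%N.
  rewrite -sum1_card (partition_big K (mem Kset)) //=.
  apply: eq_bigr => Q _; rewrite sum1dep_card; apply: eq_card => x.
  by rewrite !inE.
have M0 : 0 <= M.
  have h : forall S : {set T}, S \subset set0 -> stable_set e S -> (#|S| < s)%N.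
    move=> S; rewrite subset0 => /eqP -> _; rewrite cards0; lia.
  by have := bnd set0 h; rewrite cards0 => /ltW.
have H1 : #|T|%:R <= #|Kset|%:R * M.
  rewrite cardT natr_sum.
  apply: (@le_trans _ _ (\sum_(Q in Kset) M)).
    apply: ler_sum => Q QK; apply/ltW/bnd; exact: fib.
  by rewrite sumr_const mulr_natl.
have H2 : (#|Kset| <= alpha e ^ t)%N.
  have h : (#|Kset| <= \sum_(j < t.+1 | (0 < j)%N) 'C(#|I|, j))%N.
    rewrite -sum1_card (partition_big (fun Q : {set T} => (inord #|Q| : 'I_t.+1))
                         (fun j : 'I_t.+1 => (0 < j)%N)) /=; last first.
      move=> Q; rewrite inE => /andP[_ /andP[h0 ht]]; rewrite inordK //; lia.
    apply: leq_sum => j j0.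
    rewrite sum1dep_card -cards_draws; apply: subset_leq_card.
    apply/subsetP => Q; rewrite !inE => /andP[/andP[QI /andP[_ Qt]] /eqP hj].
    by rewrite QI /= -hj inordK.

  apply: (leq_trans h); rewrite -cI; apply: binsum; lia.
apply: (le_trans H1).
have h3 : #|Kset|%:R <= (alpha e ^ t)%:R :> R by rewrite ler_nat.
apply: (le_trans (ler_wpM2r M0 h3)).
by rewrite natrX /M !mulrA [_ * c]mulrC.
Qed.
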